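(* Let $E$ be a disjoint combination of $E_1,\dots,E_n$ and fix $i$. If $M$ is a quasi-$E_i$ term and $M\to^*_{R_E}N$, then $N$ is a quasi-$E_i$ term and $F_{E_i}(M)\to^*_{R_E}F_{E_i}(N)$.
   Context: Fix names, variables, and constructors $\mathsf{pub},\mathsf{sign},\mathsf{blind},\langle\cdot,\cdot\rangle,\{\cdot\}_\cdot$. $E_1,\dots,E_n$ are equational theories with pairwise disjoint signatures $\Sigma_{E_i}$ (disjoint from the constructors), each containing at most one associative-commutative (AC) binary symbol $\oplus_i$ and each AC-convergent; $E$ is their union, presented by the rewrite system $R_E$ (the union of the individual rewrite systems) which is terminating and confluent modulo AC of all $\oplus_i$; $\to_{R_E}$ is one rewrite step modulo AC, $\to^*_{R_E}$ its reflexive-transitive closure; $\approx_E$ is equality modulo $E$. Terms are built from names, variables, the constructors and symbols of $\Sigma_E=\bigcup_i\Sigma_{E_i}$. A term is $E_i$-alien if its head symbol is not in $\Sigma_{E_i}$. A term $M$ is a quasi-$E_i$ term if every $E_i$-alien subterm of $M$ is in $E$-normal form. Fix a function $v_E$ assigning to each ground term a variable such that $v_E(M)=v_E(N)$ iff $M\approx_E N$. The $E_i$ abstraction function $F_{E_i}$ on ground terms is defined by: $F_{E_i}(u)=u$ if $u$ is a name; $F_{E_i}(g(u_1,\dots,u_k))=g(F_{E_i}(u_1),\dots,F_{E_i}(u_k))$ if $g\in\Sigma_{E_i}$; $F_{E_i}(u)=v_E(u)$ otherwise. *)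

(* Defs.v *)
From Stdlib Require Import List Relations Arith.
Import ListNotations.
Set Implicit Arguments.

(* Each symbol f : Sy belongs
   to exactly one theory, namely E_(th f): this encodes pairwise disjointness. *)
Inductive term (Sy : Type) : Type :=
| TName  : nat -> term Sy
| TVar   : nat -> term Sy
| TPub   : term Sy -> term Sy
| TSign  : term Sy -> term Sy -> term Sy
| TBlind : term Sy -> term Sy -> term Sy
| TPair  : term Sy -> term Sy -> term Sy
| TEnc   : term Sy -> term Sy -> term Sy      (* {m}_k = TEnc m k *)
| TApp   : Sy -> list (term Sy) -> term Sy.
Arguments TName {Sy}. Arguments TVar {Sy}.

Inductive subterm {Sy} : term Sy -> term Sy -> Prop :=
| st_refl t : subterm t t
| st_pub u t : subterm u t -> subterm u (TPub t)
| st_sign1 u t1 t2 : subterm u t1 -> subterm u (TSign t1 t2)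
| st_sign2 u t1 t2 : subterm u t2 -> subterm u (TSign t1 t2)
| st_blind1 u t1 t2 : subterm u t1 -> subterm u (TBlind t1 t2)
| st_blind2 u t1 t2 : subterm u t2 -> subterm u (TBlind t1 t2)
| st_pair1 u t1 t2 : subterm u t1 -> subterm u (TPair t1 t2)
| st_pair2 u t1 t2 : subterm u t2 -> subterm u (TPair t1 t2)
| st_enc1 u t1 t2 : subterm u t1 -> subterm u (TEnc t1 t2)
| st_enc2 u t1 t2 : subterm u t2 -> subterm u (TEnc t1 t2)
| st_app u f l t : In t l -> subterm u t -> subterm u (TApp f l).

Inductive ctx {Sy} (r : term Sy -> term Sy -> Prop) : term Sy -> term Sy -> Prop :=
| ctx_base s t : r s t -> ctx r s t
| ctx_pub s t : ctx r s t -> ctx r (TPub s) (TPub t)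
| ctx_sign1 s t u : ctx r s t -> ctx r (TSign s u) (TSign t u)
| ctx_sign2 s t u : ctx r s t -> ctx r (TSign u s) (TSign u t)
| ctx_blind1 s t u : ctx r s t -> ctx r (TBlind s u) (TBlind t u)
| ctx_blind2 s t u : ctx r s t -> ctx r (TBlind u s) (TBlind u t)
| ctx_pair1 s t u : ctx r s t -> ctx r (TPair s u) (TPair t u)
| ctx_pair2 s t u : ctx r s t -> ctx r (TPair u s) (TPair u t)
| ctx_enc1 s t u : ctx r s t -> ctx r (TEnc s u) (TEnc t u)
| ctx_enc2 s t u : ctx r s t -> ctx r (TEnc u s) (TEnc u t)
| ctx_app f l1 l2 s t : ctx r s t -> ctx r (TApp f (l1 ++ s :: l2)) (TApp f (l1 ++ t :: l2)).

Fixpoint subst {Sy} (sg : nat -> term Sy) (t : term Sy) : term Sy :=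
  match t with
  | TName a => TName a
  | TVar x => sg x
  | TPub u => TPub (subst sg u)
  | TSign u v => TSign (subst sg u) (subst sg v)
  | TBlind u v => TBlind (subst sg u) (subst sg v)
  | TPair u v => TPair (subst sg u) (subst sg v)
  | TEnc u v => TEnc (subst sg u) (subst sg v)
  | TApp f l => TApp f (map (subst sg) l)
  end.

Inductive ac_ax {Sy} (isAC : Sy -> Prop) : term Sy -> term Sy -> Prop :=
| ac_comm f a b : isAC f -> ac_ax isAC (TApp f [a; b]) (TApp f [b; a])
| ac_assoc f a b c : isAC f ->
    ac_ax isAC (TApp f [a; TApp f [b; c]]) (TApp f [TApp f [a; b]; c]).

Definition ac_eq {Sy} (isAC : Sy -> Prop) : term Sy -> term Sy -> Prop :=
  clos_refl_sym_trans _ (ctx (ac_ax isAC)).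

Record rule (Sy : Type) := Rule { lhs : term Sy; rhs : term Sy }.

Definition rule_inst {Sy} (R : rule Sy -> Prop) (s t : term Sy) : Prop :=
  exists r sg, R r /\ s = subst sg (lhs r) /\ t = subst sg (rhs r).

Definition step_mod {Sy} (R : rule Sy -> Prop) (isAC : Sy -> Prop) (M N : term Sy) : Prop :=
  exists M' N', ac_eq isAC M M' /\ ctx (rule_inst R) M' N' /\ ac_eq isAC N' N.

Definition steps {Sy} (R : rule Sy -> Prop) (isAC : Sy -> Prop) : term Sy -> term Sy -> Prop :=
  clos_refl_trans _ (step_mod R isAC).

Definition normal {Sy} (R : rule Sy -> Prop) (isAC : Sy -> Prop) (t : term Sy) : Prop :=
  ~ exists u, step_mod R isAC t u.

Definition eq_theory {Sy} (R : rule Sy -> Prop) (isAC : Sy -> Prop) : term Sy -> term Sy -> Prop :=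
  clos_refl_sym_trans _ (fun s t => step_mod R isAC s t \/ ctx (ac_ax isAC) s t).

Definition terminating_on {Sy} (P : term Sy -> Prop) (st : term Sy -> term Sy -> Prop) : Prop :=
  ~ exists sq : nat -> term Sy, P (sq 0) /\ forall k, st (sq k) (sq (S k)).

Definition confluent_mod_on {Sy} (P : term Sy -> Prop) (st eqv : term Sy -> term Sy -> Prop) : Prop :=
  forall t1 t2 u1 u2, P t1 -> P t2 -> eqv t1 t2 ->
    clos_refl_trans _ st t1 u1 -> clos_refl_trans _ st t2 u2 ->
    exists v1 v2, clos_refl_trans _ st u1 v1 /\ clos_refl_trans _ st u2 v2 /\ eqv v1 v2.

Definition pure {Sy} (th : Sy -> nat) (j : nat) (t : term Sy) : Prop :=
  forall u, subterm u t -> (exists x, u = TVar x) \/ (exists f l, u = TApp f l /\ th f = j).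

Definition ground {Sy} (t : term Sy) : Prop := forall x, ~ subterm (TVar x) t.

Definition isAC_j {Sy} (ac : nat -> option Sy) (j : nat) (f : Sy) : Prop := ac j = Some f.
Definition isAC_E {Sy} (n : nat) (ac : nat -> option Sy) (f : Sy) : Prop :=
  exists j, j < n /\ ac j = Some f.
Definition R_E {Sy} (n : nat) (R : nat -> rule Sy -> Prop) (r : rule Sy) : Prop :=
  exists j, j < n /\ R j r.

(* E is the disjoint combination of E_0..E_(n-1): E_j is presented by the
   rewrite system R j (over Sigma_{E_j}) together with AC of its (at most one)
   AC symbol ac j, each E_j is AC-convergent, and R_E is terminating and
   confluent modulo AC. *)
Definition disjoint_combination {Sy} (n : nat) (th : Sy -> nat)
    (ac : nat -> option Sy) (R : nat -> rule Sy -> Prop) : Prop :=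
  (forall f, th f < n) /\
  (forall j f, ac j = Some f -> j < n /\ th f = j) /\
  (forall j r, R j r ->
     j < n /\ pure th j (lhs r) /\ pure th j (rhs r) /\
     (forall x, lhs r <> TVar x) /\
     (forall x, subterm (TVar x) (rhs r) -> subterm (TVar x) (lhs r))) /\
  (forall j, j < n ->
     terminating_on (pure th j) (step_mod (R j) (isAC_j ac j)) /\
     confluent_mod_on (pure th j) (step_mod (R j) (isAC_j ac j)) (ac_eq (isAC_j ac j))) /\
  terminating_on (fun _ => True) (step_mod (R_E n R) (isAC_E n ac)) /\
  confluent_mod_on (fun _ => True) (step_mod (R_E n R) (isAC_E n ac)) (ac_eq (isAC_E n ac)).

Definition vE_spec {Sy} (n : nat) (ac : nat -> option Sy) (R : nat -> rule Sy -> Prop)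
    (vE : term Sy -> nat) : Prop :=
  forall M N, ground M -> ground N ->
    (vE M = vE N <-> eq_theory (R_E n R) (isAC_E n ac) M N).

Definition alien {Sy} (th : Sy -> nat) (i : nat) (t : term Sy) : Prop :=
  ~ exists f l, t = TApp f l /\ th f = i.

Definition quasi {Sy} (n : nat) (th : Sy -> nat) (ac : nat -> option Sy)
    (R : nat -> rule Sy -> Prop) (i : nat) (M : term Sy) : Prop :=
  forall u, subterm u M -> alien th i u -> normal (R_E n R) (isAC_E n ac) u.

Fixpoint absF {Sy} (th : Sy -> nat) (i : nat) (vE : term Sy -> nat) (t : term Sy) : term Sy :=
  match t with
  | TName a => TName a
  | TApp f l => if Nat.eqb (th f) i then TApp f (map (absF th i vE) l) else TVar (vE t)
  | _ => TVar (vE t)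
  end.

(* Main.v *)
Require Import Defs.
From Stdlib Require Import List Relations Arith Setoid.
Import ListNotations.
Set Implicit Arguments.

#[global] Hint Constructors subterm : core.
Section Gen.
Context {Sy : Type}.

Definition term_ind' (P : term Sy -> Prop)
  (Hn : forall a, P (TName a)) (Hv : forall x, P (TVar x))
  (Hp : forall t, P t -> P (TPub t))
  (Hs : forall a b, P a -> P b -> P (TSign a b))
  (Hb : forall a b, P a -> P b -> P (TBlind a b))
  (Hpr : forall a b, P a -> P b -> P (TPair a b))
  (He : forall a b, P a -> P b -> P (TEnc a b))
  (Ha : forall f l, Forall P l -> P (TApp f l)) : forall t, P t :=
  fix F t := match t with
  | TName a => Hn a | TVar x => Hv x | TPub u => Hp u (F u)
  | TSign a b => Hs a b (F a) (F b) | TBlind a b => Hb a b (F a) (F b)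
  | TPair a b => Hpr a b (F a) (F b) | TEnc a b => He a b (F a) (F b)
  | TApp f l => Ha f l ((fix G l := match l return Forall P l with
       | [] => Forall_nil _ | x :: l' => @Forall_cons _ P x l' (F x) (G l') end) l)
  end.

Lemma subterm_trans (a b c : term Sy) : subterm a b -> subterm b c -> subterm a c.
Proof. intros H1 H2; induction H2; try (econstructor; eauto; fail); auto. Qed.

Lemma subst_var_sub sg x (t : term Sy) : subterm (TVar x) t -> subterm (sg x) (subst sg t).
Proof.
  intros H; remember (TVar x) as v eqn:E; induction H; subst; simpl;
  try (econstructor; eauto; fail).
  eapply st_app; [apply in_map; eauto| auto].
Qed.

Lemma sub_subst sg (u t : term Sy) : subterm u (subst sg t) ->
  (exists x, subterm (TVar x) t /\ subterm u (sg x)) \/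
  (exists t', subterm t' t /\ u = subst sg t' /\ forall x, t' <> TVar x).
Proof.
  intros H; remember (subst sg t) as T eqn:E; revert t E; induction H; intros t0 E.
  1: { destruct t0; try (right; eexists; split; [apply st_refl | split; [exact E | discriminate]]).
    left; eexists; split; [apply st_refl | rewrite E; apply st_refl]. }
  all: destruct t0; simpl in E; try discriminate;
    try (left; eexists; split; [apply st_refl | rewrite <- E; econstructor; eauto]; fail).
  all: try (injection E; intros; subst;
    match goal with IH : forall t, _ = _ -> _ |- _ =>
      destruct (IH _ eq_refl) as [[x [H1 H2]]|[t' [H1 [H2 H3]]]];
      [left; exists x; split; [eauto | auto]
      |right; exists t'; split; [eauto | auto]] end; fail).
  all: injection E; intros; subst.
  all: apply in_map_iff in H as [t1 [<- Hin]].
  all: destruct (IHsubterm _ eq_refl) as [[x [H1 H2]]|[t' [H1 [H2 H3]]]];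
      [left; exists x; split; [eauto | auto]
      |right; exists t'; split; [eauto | auto]].
Qed.

Lemma ground_sub (u t : term Sy) : subterm u t -> ground t -> ground u.
Proof. intros H G x Hx; apply (G x); eapply subterm_trans; eauto. Qed.

Lemma ground_pub (t : term Sy) : ground (TPub t) <-> ground t.
Proof. split; [intros G x H; apply (G x); eauto
  | intros G x H; inversion H; subst; eapply G; eauto]. Qed.

Ltac gbin := split; [intros G; split; intros x H; apply (G x); eauto
  | intros [G1 G2] x H; inversion H; subst; [eapply G1 | eapply G2]; eauto].

Lemma ground_sign (a b : term Sy) : ground (TSign a b) <-> ground a /\ ground b. Proof. gbin. Qed.
Lemma ground_blind (a b : term Sy) : ground (TBlind a b) <-> ground a /\ ground b. Proof. gbin. Qed.
Lemma ground_pair (a b : term Sy) : ground (TPair a b) <-> ground a /\ ground b. Proof. gbin. Qed.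
Lemma ground_enc (a b : term Sy) : ground (TEnc a b) <-> ground a /\ ground b. Proof. gbin. Qed.
Lemma ground_app f (l : list (term Sy)) : ground (TApp f l) <-> (forall t, In t l -> ground t).
Proof. split; [intros G t Ht x H; apply (G x); econstructor; eauto
  | intros G x H; inversion H; subst; eapply G; eauto]. Qed.

Lemma ground_ctxapp f (l1 l2 : list (term Sy)) s t :
  (ground s <-> ground t) -> (ground (TApp f (l1 ++ s :: l2)) <-> ground (TApp f (l1 ++ t :: l2))).
Proof.
  intros E; rewrite !ground_app; split; intros H x Hx; apply in_app_or in Hx;
  destruct Hx as [Hx|[Hx|Hx]]; try (apply H; apply in_or_app; auto; right; right; auto; fail);
  subst; apply E; apply H; apply in_or_app; right; left; auto.
Qed.

End Gen.
Section Main.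
Context {Sy : Type} (n : nat) (th : Sy -> nat) (ac : nat -> option Sy)
  (R : nat -> rule Sy -> Prop) (vE : term Sy -> nat) (i : nat).
Hypothesis HR : forall j r, R j r ->
     j < n /\ pure th j (lhs r) /\ pure th j (rhs r) /\
     (forall x, lhs r <> TVar x) /\
     (forall x, subterm (TVar x) (rhs r) -> subterm (TVar x) (lhs r)).
Hypothesis HvE : vE_spec n ac R vE.

Local Notation AC := (ac_eq (isAC_E n ac)).
Local Notation ST := (step_mod (R_E n R) (isAC_E n ac)).
Local Notation NF := (normal (R_E n R) (isAC_E n ac)).
Local Notation Q := (quasi n th ac R i).
Local Notation CA := (ctx (ac_ax (isAC_E n ac))).
Local Notation CR := (ctx (rule_inst (R_E n R))).
Local Notation AB := (absF th i vE).

Lemma nf_ac s t : AC s t -> NF s -> NF t.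
Proof.
  intros H Ns [u [M' [N' [H1 [H2 H3]]]]]; apply Ns; exists u, M', N'.
  split; [eapply rst_trans; eauto | auto].
Qed.

Lemma lift_ac (F : term Sy -> term Sy) :
  (forall r a b, ctx r a b -> ctx r (F a) (F b)) -> forall s t, AC s t -> AC (F s) (F t).
Proof.
  intros HF s t H; induction H.
  - apply rst_step; auto.
  - apply rst_refl.
  - apply rst_sym; auto.
  - eapply rst_trans; eauto.
Qed.

Lemma lift_st (F : term Sy -> term Sy) :
  (forall r a b, ctx r a b -> ctx r (F a) (F b)) -> forall s t, ST s t -> ST (F s) (F t).
Proof.
  intros HF s t [M' [N' [H1 [H2 H3]]]]; exists (F M'), (F N').
  split; [apply lift_ac; auto | split; [auto | apply lift_ac; auto]].
Qed.

Lemma nf_sub u t : subterm u t -> NF t -> NF u.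
Proof.
  intros H; induction H; intros Nt; auto; apply IHsubterm; intros [v Hv]; apply Nt.
  all: try (apply in_split in H as [l1 [l2 ->]];
    eexists; eapply (lift_st (fun x => TApp f (l1 ++ x :: l2))); [ | exact Hv]; intros; apply ctx_app; auto; fail).
  all: eexists; first
   [ eapply (lift_st (@TPub Sy)); [ | exact Hv]; intros; apply ctx_pub; auto
   | eapply (lift_st (fun x => TSign x t2)); [ | exact Hv]; intros; apply ctx_sign1; auto
   | eapply (lift_st (fun x => TSign t1 x)); [ | exact Hv]; intros; apply ctx_sign2; auto
   | eapply (lift_st (fun x => TBlind x t2)); [ | exact Hv]; intros; apply ctx_blind1; auto
   | eapply (lift_st (fun x => TBlind t1 x)); [ | exact Hv]; intros; apply ctx_blind2; auto
   | eapply (lift_st (fun x => TPair x t2)); [ | exact Hv]; intros; apply ctx_pair1; auto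
   | eapply (lift_st (fun x => TPair t1 x)); [ | exact Hv]; intros; apply ctx_pair2; auto
   | eapply (lift_st (fun x => TEnc x t2)); [ | exact Hv]; intros; apply ctx_enc1; auto
   | eapply (lift_st (fun x => TEnc t1 x)); [ | exact Hv]; intros; apply ctx_enc2; auto ].
Qed.

Lemma Q_sub u t : subterm u t -> Q t -> Q u.
Proof. intros H Qt v Hv; apply Qt; eapply subterm_trans; eauto. Qed.

Lemma Q_nf t : NF t -> Q t.
Proof. intros N u H _; eapply nf_sub; eauto. Qed.

Lemma Q_alien t : alien th i t -> Q t -> NF t.
Proof. intros A Qt; apply Qt; auto. Qed.

Lemma Q_app_iff f l : th f = i -> (Q (TApp f l) <-> forall t, In t l -> Q t).
Proof.
  intros Hf; split.
  - intros Qt t Ht; eapply Q_sub; [ | exact Qt]; eauto.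
  - intros Hl u Hu Au; inversion Hu; subst.
    + exfalso; apply Au; eauto.
    + eapply Hl; eauto.
Qed.

Lemma Q2 f a b : th f = i -> (Q (TApp f [a; b]) <-> Q a /\ Q b).
Proof.
  intros Hf; rewrite Q_app_iff; auto; split.
  - intros H; split; apply H; simpl; auto.
  - intros [H1 H2] t [<-|[<-|[]]]; auto.
Qed.

Lemma alien_app f l : th f <> i -> alien th i (TApp f l).
Proof. intros Hf [g [l' [E Hg]]]; injection E; intros; subst; auto. Qed.

Lemma Q_alien_iff s t : alien th i s -> alien th i t -> AC s t -> (Q s <-> Q t).
Proof.
  intros As At H; split; intro; apply Q_nf.
  - eapply nf_ac; [exact H | apply Q_alien; auto].
  - eapply nf_ac; [apply rst_sym; exact H | apply Q_alien; auto].
Qed.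

Ltac al := let f := fresh in let l := fresh in let E := fresh in
  intros [f [l [E _]]]; discriminate.

Lemma P3 s t : CA s t -> (Q s <-> Q t).
Proof.
  intros H; induction H.
  1: { destruct H as [f a b Hf | f a b c Hf]; destruct (Nat.eq_dec (th f) i) as [e|e].
    + rewrite !Q2; tauto.
    + apply Q_alien_iff; try apply alien_app; auto. apply rst_step; constructor; constructor; auto.
    + rewrite !Q2; tauto.
    + apply Q_alien_iff; try apply alien_app; auto. apply rst_step; constructor; constructor; auto. }
  all: try (apply Q_alien_iff; [al | al | apply rst_step; econstructor; eauto]; fail).
  all: try (apply Q_alien_iff; [al | al | apply rst_step]; [apply ctx_sign2 | apply ctx_blind2 | apply ctx_pair2 | apply ctx_enc2]; auto; fail).
  destruct (Nat.eq_dec (th f) i) as [e|e].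
  - rewrite !Q_app_iff; auto. split; intros H' x Hx; apply in_app_or in Hx;
    destruct Hx as [Hx|[Hx|Hx]]; try (apply H'; apply in_or_app; auto; right; right; auto; fail);
    subst; apply IHctx; apply H'; apply in_or_app; right; left; auto.
  - apply Q_alien_iff; try apply alien_app; auto. apply rst_step; apply ctx_app; auto.
Qed.


Lemma g2 f (a b : term Sy) : ground (TApp f [a; b]) <-> ground a /\ ground b.
Proof.
  rewrite ground_app; split.
  - intros H; split; apply H; simpl; auto.
  - intros [H1 H2] t [<-|[<-|[]]]; auto.
Qed.

Lemma P1 s t : CA s t -> (ground s <-> ground t).
Proof.
  intros H; induction H.
  1: { destruct H as [f a b Hf | f a b c Hf]; rewrite !g2; tauto. }
  all: try rewrite !ground_pub; try rewrite !ground_sign; try rewrite !ground_blind;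
    try rewrite !ground_pair; try rewrite !ground_enc; try tauto.
  apply ground_ctxapp; auto.
Qed.

Lemma var_ac s t : ground s -> ground t ->
  eq_theory (R_E n R) (isAC_E n ac) s t -> AC (TVar (vE s)) (TVar (vE t)).
Proof. intros G1 G2 E; rewrite (proj2 (HvE G1 G2) E); apply rst_refl. Qed.

Lemma P2 s t : CA s t -> ground s -> AC (AB s) (AB t).
Proof.
  intros H Gs; assert (Gt : ground t) by (apply (proj1 (P1 H)); auto).
  assert (Et : eq_theory (R_E n R) (isAC_E n ac) s t) by (apply rst_step; right; auto).
  revert Gs Gt Et; induction H; intros Gs Gt Et.
  1: { destruct H as [f a b Hf | f a b c Hf]; simpl; destruct (th f =? i) eqn:E.
    - apply rst_step; apply ctx_base; apply ac_comm; auto.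
    - apply var_ac; auto.
    - apply rst_step; apply ctx_base; apply ac_assoc; auto.
    - apply var_ac; auto. }
  all: simpl; try (apply var_ac; auto; fail).
  destruct (th f =? i) eqn:E; [| apply var_ac; auto].
  rewrite !map_app; simpl.
  apply (lift_ac (fun x => TApp f (map AB l1 ++ x :: map AB l2))).
  - intros; apply ctx_app; auto.
  - rewrite ground_app in Gs, Gt.
    assert (ground s) by (apply Gs; apply in_or_app; right; left; auto).
    assert (ground t) by (apply Gt; apply in_or_app; right; left; auto).
    apply IHctx; auto. apply rst_step; right; auto.
Qed.

Lemma AC_abs s t : AC s t ->
  (ground s <-> ground t) /\ (ground s -> AC (AB s) (AB t)) /\ (Q s <-> Q t).
Proof.
  intros H; induction H.
  - split; [apply P1; auto | split; [apply P2; auto | apply P3; auto]].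
  - split; [tauto | split; [intros; apply rst_refl | tauto]].
  - destruct IHclos_refl_sym_trans as [A [B C]]; split; [tauto | split; [|tauto]].
    intros G; apply rst_sym; apply B; tauto.
  - destruct IHclos_refl_sym_trans1 as [A [B C]]; destruct IHclos_refl_sym_trans2 as [A' [B' C']].
    split; [tauto | split; [|tauto]]. intros G; eapply rst_trans; [apply B | apply B']; tauto.
Qed.

Lemma pure_shape j (t : term Sy) : pure th j t -> (exists x, t = TVar x) \/ (exists f l, t = TApp f l /\ th f = j).
Proof. intros P; apply P; auto. Qed.

Lemma absF_subst_pure sg t : pure th i t -> AB (subst sg t) = subst (fun x => AB (sg x)) t.
Proof.
  induction t using term_ind'; intros P; try reflexivity;
  try (destruct (pure_shape P) as [[x E]|[f [l [E _]]]]; discriminate).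
  destruct (pure_shape P) as [[x E]|[g [l' [E Hg]]]]; [discriminate|].
  injection E; intros; subst. simpl. rewrite Nat.eqb_refl. f_equal.
  rewrite map_map; apply map_ext_in; intros a Ha.
  rewrite Forall_forall in H; apply H; auto.
  intros u Hu; apply P; eauto.
Qed.

Lemma alien_step s t : alien th i s -> Q s -> CR s t -> False.
Proof.
  intros A Qs H; apply (Q_alien A Qs); exists t, s, t.
  split; [apply rst_refl | split; [auto | apply rst_refl]].
Qed.

Lemma P4 s t : CR s t -> Q s -> ground s -> Q t /\ ground t /\ CR (AB s) (AB t).
Proof.
  intros H; induction H; intros Qs Gs.
  1: { destruct H as [r [sg [[j [Hj HRj]] [E1 E2]]]]; subst.
    destruct (HR HRj) as [_ [Pl [Pr [Nv Inc]]]].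
    destruct (pure_shape Pl) as [[x E]|[f [l [E Hf]]]]; [exfalso; eapply Nv; eauto|].
    destruct (Nat.eq_dec j i) as [e|e].
    2: { exfalso; eapply alien_step; [ | exact Qs | ].
         - rewrite E; simpl; apply alien_app; congruence.
         - apply ctx_base; exists r, sg; split; [exists j; auto | auto]. }
    rewrite e in HRj, Pl, Pr, Hj, Hf. split; [|split].
    - intros u Hu Au. destruct (sub_subst _ _ Hu) as [[x [H1 H2]]|[t' [H1 [H2 H3]]]].
      + apply Qs; auto. eapply subterm_trans; [exact H2 | apply subst_var_sub; auto].
      + exfalso; destruct (Pr _ H1) as [[x E']|[g [l' [E' Hg]]]]; [eapply H3; eauto|].
        subst; apply Au; simpl; eauto.
    - intros y Hy. destruct (sub_subst _ _ Hy) as [[x [H1 H2]]|[t' [H1 [H2 H3]]]].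
      + apply (Gs y); eapply subterm_trans; [exact H2 | apply subst_var_sub; auto].
      + destruct t'; simpl in H2; try discriminate. eapply H3; eauto.
    - rewrite !absF_subst_pure; auto. apply ctx_base.
      exists r, (fun x => AB (sg x)); split; [exists i; auto | auto]. }
  all: try (exfalso; eapply alien_step; [ | exact Qs | econstructor; eauto]; al; fail).
  all: try (exfalso; eapply alien_step; [ | exact Qs | ]; [al | ];
     first [apply ctx_sign2 | apply ctx_blind2 | apply ctx_pair2 | apply ctx_enc2]; eauto; fail).
  destruct (Nat.eq_dec (th f) i) as [e|e].
  2: { exfalso; eapply alien_step; [apply alien_app; exact e | exact Qs | apply ctx_app; eauto]. }
  assert (Hin : In s (l1 ++ s :: l2)) by (apply in_or_app; right; left; auto).
  destruct IHctx as [Qt [Gt Ct]].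
  - eapply Q_sub; [ | exact Qs]; eauto.
  - eapply ground_sub; [ | exact Gs]; eauto.
  - split; [|split].
    + rewrite Q_app_iff in Qs |- *; auto. intros x Hx; apply in_app_or in Hx;
      destruct Hx as [Hx|[Hx|Hx]]; [apply Qs; apply in_or_app; auto | subst; auto |
      apply Qs; apply in_or_app; right; right; auto].
    + rewrite ground_app in Gs |- *. intros x Hx; apply in_app_or in Hx;
      destruct Hx as [Hx|[Hx|Hx]]; [apply Gs; apply in_or_app; auto | subst; auto |
      apply Gs; apply in_or_app; right; right; auto].
    + simpl; rewrite e, Nat.eqb_refl, !map_app; simpl; apply ctx_app; auto.
Qed.

Lemma one_step M N : ST M N -> Q M -> ground M -> Q N /\ ground N /\ ST (AB M) (AB N).
Proof.
  intros [M' [N' [H1 [H2 H3]]]] QM GM.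
  destruct (AC_abs H1) as [A1 [B1 C1]].
  destruct (P4 H2) as [Q' [G' C']]; try tauto.
  destruct (AC_abs H3) as [A3 [B3 C3]].
  split; [tauto | split; [tauto |]].
  exists (AB M'), (AB N'); split; [auto | split; auto].
Qed.

Lemma many M N : steps (R_E n R) (isAC_E n ac) M N -> Q M -> ground M ->
  Q N /\ ground N /\ steps (R_E n R) (isAC_E n ac) (AB M) (AB N).
Proof.
  intros H; induction H; intros QM GM.
  - destruct (one_step H QM GM) as [A [B C]]; split; [|split]; auto; apply rt_step; auto.
  - split; [|split]; auto; apply rt_refl.
  - destruct (IHclos_refl_trans1 QM GM) as [A [B C]].
    destruct (IHclos_refl_trans2 A B) as [A' [B' C']].
    split; [|split]; auto; eapply rt_trans; eauto.
Qed.

End Main.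
Unset Implicit Arguments.

Theorem proposition2 (Sy : Type) (n : nat) (th : Sy -> nat) (ac : nat -> option Sy)
    (R : nat -> rule Sy -> Prop) (vE : term Sy -> nat) (i : nat) (M N : term Sy) :
  disjoint_combination n th ac R ->
  vE_spec n ac R vE ->
  i < n ->
  ground M ->
  quasi n th ac R i M ->
  steps (R_E n R) (isAC_E n ac) M N ->
  quasi n th ac R i N /\
  steps (R_E n R) (isAC_E n ac) (absF th i vE M) (absF th i vE N).
Proof.
  intros [_ [_ [HR _]]] HvE _ GM QM H.
  destruct (many HR HvE H QM GM) as [A [_ C]]; auto.
Qed.
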